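(* Let $\mathcal E$ be an exchangeability system for a noncommutative probability space $(\mathcal A,\phi)$, let $(X_{i,j})_{i\in[m],\,j\in[n_i]}\subseteq\mathcal A$, $n=n_1+\dots+n_m$, and $\pi\in\Pi_m$. Then $$K_\pi\Big(\prod_{j=1}^{n_1}X_{1,j},\dots,\prod_{j=1}^{n_m}X_{m,j}\Big)=\sum_{\substack{\sigma\in\Pi_n\\ \sigma\vee\tilde{\hat0}_m=\tilde\pi}}K_\sigma(X_{1,1},X_{1,2},\dots,X_{m,n_m}),$$ where products are taken in increasing order of $j$.
   Context: A noncommutative probability space is a pair $(\mathcal A,\phi)$ of a complex unital algebra $\mathcal A$ and a unital linear functional $\phi$. An exchangeability system $\mathcal E$ for $(\mathcal A,\phi)$ consists of a noncommutative probability space $(\mathcal U,\tilde\phi)$ and a family $(\iota_k)_{k\in\mathbb N}$ of embeddings (injective unital algebra homomorphisms) $\iota_k:\mathcal A\to\mathcal A_k\subseteq\mathcal U$ with $\tilde\phi\circ\iota_k=\phi$; write $X^{(k)}=\iota_k(X)$. It is required that for all $X_1,\dots,X_n\in\mathcal A$, indices $i_1,\dots,i_n\in\mathbb N$ and bijections $\sigma$ of $\mathbb N$, $\tilde\phi(X_1^{(i_1)}\cdots X_n^{(i_n)})=\tilde\phi(X_1^{(\sigma(i_1))}\cdots X_n^{(\sigma(i_n))})$; this value depends only on the kernel of $j\mapsto i_j$ and for a partition $\pi$ is denoted $\phi_\pi(X_1,\dots,X_n)$. $\Pi_n$ is the lattice of set partitions of $[n]$ under refinement with Möbius function $\mu$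 and join $\vee$; $K_\pi=\sum_{\sigma\le\pi}\phi_\sigma\,\mu(\sigma,\pi)$. Identify $[n]$ with $\{(i,j):i\in[m],j\in[n_i]\}$ in lexicographic order. Each $\pi\in\Pi_m$ induces $\tilde\pi\in\Pi_n$ with blocks $\{(i,j):i\in B,j\in[n_i]\}$ for $B\in\pi$; $\hat0_m$ is the partition of $[m]$ into singletons. *)

(* Defs.v *)
From HB Require Import structures.
From mathcomp Require Import all_boot all_order all_algebra.
From mathcomp Require Import complex.
From mathcomp Require Import reals.

Set Implicit Arguments.
Unset Strict Implicit.
Unset Printing Implicit Defensive.

Import Order.TTheory GRing.Theory Num.Theory.
Local Open Scope ring_scope.

Section ExchDefs.

Variable C : fieldType.

Record exch_system (A : algType C) (phi : A -> C) := ExchSystem {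
  exU : algType C;
  exphi : exU -> C;
  exphi_lin : forall (a : C) (x y : exU), exphi (a *: x + y) = a * exphi x + exphi y;
  exphi1 : exphi 1 = 1;
  exiota : nat -> {lrmorphism A -> exU};
  exiota_inj : forall k, injective (exiota k);
  exiota_phi : forall k (x : A), exphi (exiota k x) = phi x;
  exch_inv : forall (n : nat) (X : 'I_n -> A) (idx : 'I_n -> nat) (s : nat -> nat),
      bijective s ->
      exphi (\prod_(j < n) exiota (idx j) (X j))
      = exphi (\prod_(j < n) exiota (s (idx j)) (X j))
}.

Definition is_part (n : nat) (s : {set {set 'I_n}}) : bool := partition s [set: 'I_n].

Definition refines (n : nat) (s p : {set {set 'I_n}}) : bool :=
  [forall B in s, [exists B' in p, B \subset B']].

Definition is_join (n : nat) (a b c : {set {set 'I_n}}) : bool :=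
  [&& is_part c, refines a c, refines b c &
      [forall d : {set {set 'I_n}},
         is_part d ==> refines a d ==> refines b d ==> refines c d]].

(* Moebius function of the poset Pi_n, by the usual recursion
   mu(s,s) = 1, mu(s,p) = - sum_{s <= z < p} mu(s,z) for s < p, 0 otherwise;
   the recursion is run with enough fuel (the depth is bounded by #|Pi_n|). *)
Fixpoint mob_rec (n : nat) (k : nat) (s p : {set {set 'I_n}}) : C :=
  match k with
  | 0 => 0
  | k'.+1 =>
      if s == p then 1
      else if refines s p then
        - \sum_(z : {set {set 'I_n}} |
                  [&& is_part z, refines s z, refines z p & z != p])
            mob_rec k' s z
      else 0
  end.

Definition mobius (n : nat) (s p : {set {set 'I_n}}) : C :=
  mob_rec (#|{: {set {set 'I_n}}}|).+1 s p.

Variables (A : algType C) (phi : A -> C) (E : exch_system phi).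

(* phi_s(X_1,...,X_n): evaluate with any index assignment whose kernel is s;
   we take j |-> (code of the block of s containing j). *)
Definition phi_part (n : nat) (s : {set {set 'I_n}}) (X : 'I_n -> A) : C :=
  @exphi _ _ E (\prod_(j < n) @exiota _ _ E (pickle (pblock s j)) (X j)).

Definition Kpart (n : nat) (p : {set {set 'I_n}}) (X : 'I_n -> A) : C :=
  \sum_(s : {set {set 'I_n}} | is_part s && refines s p) phi_part s X * mobius s p.

End ExchDefs.

(* Lexicographic identification of [n], n = n_1 + ... + n_m, with pairs (i,j). *)
Section Lex.

Variables (m : nat) (n_ : 'I_m -> nat).

(* the first coordinate i of the k-th pair, as a nat *)
Definition owners : seq nat := flatten [seq nseq (n_ i) (val i) | i <- enum 'I_m].

Definition tilde (pi : {set {set 'I_m}}) : {set {set 'I_(\sum_(i < m) n_ i)}} :=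
  [set [set k : 'I_(\sum_(i < m) n_ i) | [exists i : 'I_m, (i \in B) && (nth 0%N owners k == val i)]]
  | B : {set 'I_m} in pi].

Definition zero_part : {set {set 'I_m}} := [set [set i] | i : 'I_m].

Definition flatX (T : zmodType) (X : forall i : 'I_m, 'I_(n_ i) -> T)
  : 'I_(\sum_(i < m) n_ i) -> T :=
  fun k => nth 0 (flatten [seq [seq X i j | j <- enum 'I_(n_ i)] | i <- enum 'I_m]) k.

End Lex.

(* Main.v *)
Require Import Defs.
From HB Require Import structures.
From mathcomp Require Import all_boot all_order all_algebra.
From mathcomp Require Import complex reals.
Import GRing.Theory Num.Theory.
Local Open Scope ring_scope.
Set Implicit Arguments.
Unset Strict Implicit.
Unset Printing Implicit Defensive.


Section Part.
Variable n : nat.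
Local Notation PT := {set {set 'I_n}}.

Lemma refines_refl (s : PT) : refines s s.
Proof. by apply/forall_inP => B HB; apply/exists_inP; exists B. Qed.

Lemma refines_trans (a b c : PT) : refines a b -> refines b c -> refines a c.
Proof.
move=> /forall_inP ab /forall_inP bc; apply/forall_inP => B HB.
have /exists_inP [B' HB' s1] := ab B HB.
have /exists_inP [B'' HB'' s2] := bc B' HB'.
by apply/exists_inP; exists B''; rewrite // (subset_trans s1 s2).
Qed.

Lemma part_cover (s : PT) x : is_part s -> x \in cover s.
Proof. by case/and3P => /eqP -> _ _; rewrite inE. Qed.

Lemma part_triv (s : PT) : is_part s -> trivIset s.
Proof. by case/and3P. Qed.

Lemma refinesP (a b : PT) : is_part a -> is_part b ->
  reflect (forall x y, y \in pblock a x -> y \in pblock b x) (refines a b).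
Proof.
move=> Pa Pb; apply: (iffP forall_inP) => [H x y yx | H B HB].
  have /exists_inP [B' HB' sB] := H _ (pblock_mem (part_cover x Pa)).
  have xB' : x \in B' by apply: (subsetP sB); rewrite mem_pblock part_cover.
  by rewrite (def_pblock (part_triv Pb) HB' xB'); apply: (subsetP sB).
have /set0Pn [x xB] : B != set0 by apply: (partition_neq0 Pa).
apply/exists_inP; exists (pblock b x); first exact: pblock_mem (part_cover x Pb).
apply/subsetP => y yB; apply: H.
by rewrite (def_pblock (part_triv Pa) HB xB).
Qed.

Lemma refines_antisym (a b : PT) : is_part a -> is_part b -> refines a b -> refines b a -> a = b.
Proof.
move=> Pa Pb ab ba.
suff sub : forall a b : PT, is_part a -> is_part b -> refines a b -> refines b a -> a \subset b.
  by apply/eqP; rewrite eqEsubset !sub.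
move=> {Pa Pb ab ba a b} a b Pa Pb /(refinesP Pa Pb) ab /(refinesP Pb Pa) ba.
apply/subsetP => B HB.
have /set0Pn [x xB] : B != set0 by apply: (partition_neq0 Pa).
have -> : B = pblock a x by rewrite (def_pblock (part_triv Pa) HB xB).
suff -> : pblock a x = pblock b x by apply: pblock_mem (part_cover x Pb).
by apply/setP => y; apply/idP/idP => [/ab|/ba].
Qed.

Definition cnt (p : PT) := #|[set z | is_part z && refines z p]|.

Lemma cnt_lt (z p : PT) : is_part z -> is_part p -> refines z p -> z != p -> (cnt z < cnt p)%N.
Proof.
move=> Pz Pp zp nzp; apply: proper_card; rewrite properE; apply/andP; split.
  apply/subsetP => y; rewrite !inE => /andP [-> yz] /=.
  exact: refines_trans yz zp.
apply/subsetPn; exists p; first by rewrite inE Pp refines_refl.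
rewrite inE Pp /=; apply: contra nzp => pz.
by rewrite (refines_antisym Pz Pp zp pz).
Qed.

Lemma cnt_max (p : PT) : (cnt p <= #|{: {set {set 'I_n}}}|)%N.
Proof. exact: max_card. Qed.


Section Mob.
Variable C : fieldType.

Lemma mob_stable k k' (s p : PT) : is_part p -> (cnt p < k)%N -> (cnt p < k')%N ->
  mob_rec C k s p = mob_rec C k' s p.
Proof.
elim: k k' p => [|k IH] [|k'] p Pp //= hk hk'.
case: eqP => // _; case: ifP => // _; congr (- _).
apply: eq_bigr => z /and4P [Pz sz zp nzp].
have lt := cnt_lt Pz Pp zp nzp.
by apply: IH => //; apply: leq_trans lt _; rewrite -ltnS.
Qed.

Definition TOP := #|{: {set {set 'I_n}}}|.

Lemma mobius_rec (s p : PT) : is_part p -> s != p -> refines s p ->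
  mobius C s p = - \sum_(z : PT | [&& is_part z, refines s z, refines z p & z != p])
       mobius C s z.
Proof.
move=> Pp nsp sp; rewrite {1}/mobius [X in X = _]/=.
rewrite (negbTE nsp) sp; congr (- _); apply: eq_bigr => z /and4P [Pz sz zp nzp].
have lt := cnt_lt Pz Pp zp nzp.
rewrite /mobius; apply: mob_stable => //.
  by apply: leq_trans lt _; exact: cnt_max.
by apply: leq_trans (ltnW lt) _; exact: cnt_max.
Qed.

Lemma mobius_id (s : PT) : mobius C s s = 1.
Proof. by rewrite /mobius /= eqxx. Qed.

Lemma mobius_left (s p : PT) : is_part s -> is_part p -> refines s p ->
  \sum_(z : PT | [&& is_part z, refines s z & refines z p]) mobius C s z = (s == p)%:R.
Proof.
move=> Ps Pp sp; case: eqP => [<-|/eqP nsp].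
  rewrite (big_pred1 s) ?mobius_id // => z; apply/and3P/eqP => [[Pz sz zs]|->].
    by apply: refines_antisym.
  by rewrite Ps refines_refl.
rewrite (bigD1 p) /=; last by rewrite Pp sp refines_refl.
rewrite mobius_rec // addrC.
rewrite (eq_bigl (fun z => [&& is_part z, refines s z, refines z p & z != p])).
  by rewrite subrr.
by move=> z; rewrite -!andbA.
Qed.

Lemma L1 (F : PT -> C) (p : PT) : is_part p ->
  \sum_(r : PT | is_part r && refines r p)
     \sum_(s : PT | is_part s && refines s r) F s * mobius C s r = F p.
Proof.
move=> Pp.
rewrite (exchange_big_dep (fun s => is_part s && refines s p)) /=; last first.
  by move=> r s /andP [_ rp] /andP [Ps sr]; rewrite Ps (refines_trans sr rp).
rewrite (bigD1 p) /=; last by rewrite Pp refines_refl.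
rewrite [X in _ + X]big1 ?addr0.
  rewrite -mulr_sumr (eq_bigl (fun z => [&& is_part z, refines p z & refines z p])).
    by rewrite mobius_left ?refines_refl // eqxx mulr1.
  by move=> z /=; rewrite Pp; case: (is_part z); case: (refines z p); case: (refines p z).
move=> s /andP [/andP [Ps sp] nsp].
rewrite -mulr_sumr (eq_bigl (fun z => [&& is_part z, refines s z & refines z p])).
  by rewrite mobius_left // (negbTE nsp) mulr0.
by move=> z /=; rewrite Ps; case: (is_part z); case: (refines z p); case: (refines s z).
Qed.

Lemma uniq_sum (G G' : PT -> C) :
  (forall p, is_part p -> \sum_(s : PT | is_part s && refines s p) G s
                        = \sum_(s : PT | is_part s && refines s p) G' s) ->
  forall p, is_part p -> G p = G' p.
Proof.
move=> H p Pp.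
suff: forall k p, is_part p -> (cnt p < k)%N -> G p = G' p.
  by move=> /(_ (cnt p).+1 p Pp (ltnSn _)).
elim=> [//|k IH] q Pq lt.
have := H q Pq; rewrite (bigD1 q) /=; last by rewrite Pq refines_refl.
rewrite [in X in _ = X](bigD1 q) /=; last by rewrite Pq refines_refl.
rewrite (eq_bigr (fun s => G' s)); first by move/addIr.
move=> s /andP [/andP [Ps sq] nsq]; apply: IH => //.
by rewrite -ltnS; apply: leq_trans lt; rewrite ltnS; apply: cnt_lt.
Qed.

Lemma L2 (F G : PT -> C) :
  (forall p, is_part p -> \sum_(s : PT | is_part s && refines s p) G s = F p) ->
  forall p, is_part p -> G p = \sum_(s : PT | is_part s && refines s p) F s * mobius C s p.
Proof.
move=> H; apply: uniq_sum => p Pp.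
by rewrite H // L1.
Qed.

End Mob.
End Part.

Definition sw (a b x : nat) := if x == a then b else if x == b then a else x.

Lemma swK a b : cancel (sw a b) (sw a b).
Proof.
move=> x; rewrite /sw.
case: (eqVneq x a) => [->|xa].
  by case: (eqVneq b a) => [->|ba]; rewrite ?eqxx // eq_sym (negbTE ba) eqxx.
case: (eqVneq x b) => [->|xb]; first by rewrite eqxx.
by rewrite (negbTE xa) (negbTE xb).
Qed.

Lemma ext_bij (T : eqType) (f g : T -> nat) (r : seq T) :
  {in r &, forall x y, (f x == f y) = (g x == g y)} ->
  exists s : nat -> nat, bijective s /\ {in r, forall x, s (f x) = g x}.
Proof.
elim: r => [|a r IH] H.
  by exists id; split => //; exists id.
have H' : {in r &, forall x y, (f x == f y) = (g x == g y)}.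
  by move=> x y xr yr; apply: H; rewrite inE ?xr ?yr orbT.
have [s [bs Hs]] := IH H'.
have ar : a \in a :: r by rewrite inE eqxx.
case: (boolP (has (fun y => f y == f a) r)) => [/hasP [y yr /eqP fya]|].
  exists s; split => // x; rewrite inE => /predU1P [->|xr]; last exact: Hs.
  rewrite -fya Hs //; apply/eqP; rewrite -H ?fya // inE yr orbT //.
move/hasPn => nH.
exists (sw (s (f a)) (g a) \o s); split.
  apply: bij_comp => //; exists (sw (s (f a)) (g a)); exact: swK.
move=> x; rewrite inE => /predU1P [->|xr] /=; first by rewrite /sw eqxx.
rewrite (Hs x xr) /sw.
have xa : f x != f a by apply: nH.
have gxa : g x != g a by rewrite -H // inE ?xr ?orbT.
have : g x != s (f a).
  rewrite -Hs //; apply: contra xa => /eqP E; apply/eqP; exact: (bij_inj bs E).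
by move/negbTE => ->; rewrite (negbTE gxa).
Qed.

Lemma phi_kernel (C : fieldType) (A : algType C) (phi : A -> C) (E : exch_system phi)
  n (X : 'I_n -> A) (f g : 'I_n -> nat) :
  (forall j j', (f j == f j') = (g j == g j')) ->
  exphi (e:=E) (\prod_(j < n) exiota E (f j) (X j)) = exphi (e:=E) (\prod_(j < n) exiota E (g j) (X j)).
Proof.
move=> H.
have [s [bs Hs]] := @ext_bij _ f g (enum 'I_n) (fun x y _ _ => H x y).
rewrite (exch_inv E X f bs); apply: congr1; apply: eq_bigr => j _.
by rewrite Hs // mem_enum.
Qed.

Section Lex2.
Variables (m : nat) (n_ : 'I_m -> nat).
Hypothesis npos : forall i, (0 < n_ i)%N.
Local Notation N := (\sum_(i < m) n_ i).

Lemma size_owners : size (owners n_) = N.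
Proof.
rewrite /owners size_flatten /shape -map_comp sumnE big_map.
rewrite /= (eq_bigr n_) ?big_enum //= => i _; exact: size_nseq.
Qed.

Lemma owners_lt (k : 'I_N) : (nth 0%N (owners n_) k < m)%N.
Proof.
have : nth 0%N (owners n_) k \in owners n_ by rewrite mem_nth // size_owners.
case/flattenP => s /mapP [i _ ->]; rewrite mem_nseq => /andP [_ /eqP ->].
exact: ltn_ord.
Qed.

Definition o (k : 'I_N) : 'I_m := Ordinal (owners_lt k).

Lemma o_surj (i : 'I_m) : exists k, o k = i.
Proof.
have iin : val i \in owners n_.
  apply/flattenP; exists (nseq (n_ i) (val i)); last by rewrite mem_nseq npos eqxx.
  by apply/mapP; exists i; rewrite ?mem_enum.
have lt : (index (val i) (owners n_) < N)%N by rewrite -size_owners index_mem.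
by exists (Ordinal lt); apply: val_inj; rewrite /= nth_index.
Qed.

Lemma tildeE (s : {set {set 'I_m}}) : tilde n_ s = [set o @^-1: B | B : {set 'I_m} in s].
Proof.
rewrite /tilde; apply: (@eq_imset _ _ _ (fun B : {set 'I_m} => o @^-1: B)) => B.
apply/setP => k; rewrite !inE.
apply/existsP/idP => [[i /andP [iB /eqP E]]|kB].
  by have -> : o k = i by apply: val_inj.
by exists (o k); rewrite kB eqxx.
Qed.

Local Notation t := (fun s => [set o @^-1: B | B : {set 'I_m} in s]).

Lemma part_sym n (P : {set {set 'I_n}}) x y : is_part P -> y \in pblock P x -> x \in pblock P y.
Proof.
move=> PP yx; rewrite (same_pblock (part_triv PP) yx) mem_pblock; exact: part_cover.
Qed.

Lemma part_trans n (P : {set {set 'I_n}}) x y z : is_part P ->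
  y \in pblock P x -> z \in pblock P y -> z \in pblock P x.
Proof. by move=> PP yx; rewrite (same_pblock (part_triv PP) yx). Qed.

Lemma part_refl n (P : {set {set 'I_n}}) x : is_part P -> x \in pblock P x.
Proof. by move=> PP; rewrite mem_pblock; exact: part_cover. Qed.

Lemma t_part (s : {set {set 'I_m}}) : is_part s -> is_part (t s).
Proof.
move=> Ps; apply/and3P; split.
- rewrite eqEsubset subsetT /=; apply/subsetP => k _; apply/bigcupP.
  exists (o @^-1: pblock s (o k)); first by apply: imset_f; exact: pblock_mem (part_cover _ Ps).
  by rewrite inE part_refl.
- apply/trivIsetP => _ _ /imsetP [B1 HB1 ->] /imsetP [B2 HB2 ->] ne.
  have ne12 : B1 != B2 by apply: contra ne => /eqP ->.
  move/trivIsetP: (part_triv Ps) => /(_ _ _ HB1 HB2 ne12) dis.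
  apply/pred0P => k /=; rewrite !inE; case h1: (o k \in B1) => //=.
  by rewrite (disjointFr dis h1).
- apply/imsetP => [[B HB E]].
  have /set0Pn [i iB] : B != set0 by apply: (partition_neq0 Ps).
  have [k ok] := o_surj i.
  have : k \in o @^-1: B by rewrite inE ok.
  by rewrite -E inE.
Qed.

Lemma pblock_t (s : {set {set 'I_m}}) k : is_part s ->
  pblock (t s) k = o @^-1: pblock s (o k).
Proof.
move=> Ps; apply: def_pblock; first exact: part_triv (t_part Ps).
  by apply: imset_f; exact: pblock_mem (part_cover _ Ps).
by rewrite inE part_refl.
Qed.

Lemma ref_t (s s' : {set {set 'I_m}}) : is_part s -> is_part s' ->
  refines (t s) (t s') = refines s s'.
Proof.
move=> Ps Ps'; apply/(refinesP (t_part Ps) (t_part Ps'))/(refinesP Ps Ps') => H.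
  move=> i i' ii'; have [k ok] := o_surj i; have [k' ok'] := o_surj i'.
  by have := H k k'; rewrite !pblock_t // !inE ok ok'; apply.
by move=> k k'; rewrite !pblock_t // !inE; apply: H.
Qed.

Lemma zero_part_part : is_part (zero_part m).
Proof.
apply/and3P; split.
- rewrite eqEsubset subsetT /=; apply/subsetP => i _; apply/bigcupP.
  by exists [set i]; rewrite ?set11 // imset_f.
- apply/trivIsetP => _ _ /imsetP [i _ ->] /imsetP [j _ ->] ne.
  apply/pred0P => x /=; rewrite !inE; apply/negbTE/negP => /andP [/eqP -> /eqP ij].
  by rewrite ij eqxx in ne.
- apply/imsetP => [[i _ E]].
  by have := set11 i; rewrite -E inE.
Qed.

Lemma pblock_zero i : pblock (zero_part m) i = [set i].
Proof.
apply: def_pblock; first exact: part_triv zero_part_part.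
  exact: imset_f. exact: set11.
Qed.

Lemma zero_ref (s : {set {set 'I_m}}) : is_part s -> refines (zero_part m) s.
Proof.
move=> Ps; apply/(refinesP zero_part_part Ps) => x y.
by rewrite pblock_zero inE => /eqP ->; exact: part_refl.
Qed.

Lemma t0_ref (d : {set {set 'I_N}}) : is_part d -> refines (t (zero_part m)) d ->
  forall k k', o k' = o k -> k' \in pblock d k.
Proof.
move=> Pd /(refinesP (t_part zero_part_part) Pd) H k k' E; apply: H.
by rewrite pblock_t ?zero_part_part // inE pblock_zero inE E.
Qed.

Definition ee (r : {set {set 'I_N}}) : rel 'I_m :=
  fun i i' => [exists k, exists k', [&& k' \in pblock r k, o k == i & o k' == i']].

Lemma ee_sym r : is_part r -> symmetric (ee r).
Proof.
move=> Pr i i'; apply/existsP/existsP => [] [k /existsP [k' /and3P [kk' ok ok']]];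
  by exists k'; apply/existsP; exists k; rewrite ok ok' part_sym.
Qed.

Definition q (r : {set {set 'I_N}}) := equivalence_partition (connect (ee r)) [set: 'I_m].

Lemma q_equiv r : is_part r -> {in [set: 'I_m] & &, equivalence_rel (connect (ee r))}.
Proof.
move=> Pr x y z _ _ _; split; first exact: connect0.
by move=> cxy; rewrite (same_connect (sym_connect_sym (ee_sym Pr)) cxy).
Qed.

Lemma q_part r : is_part r -> is_part (q r).
Proof. by move=> Pr; apply: equivalence_partitionP; exact: q_equiv. Qed.

Lemma pblock_q r i i' : is_part r -> (i' \in pblock (q r) i) = connect (ee r) i i'.
Proof. by move=> Pr; rewrite pblock_equivalence_partition ?inE //; exact: q_equiv. Qed.

Lemma ref_q (r : {set {set 'I_N}}) (s : {set {set 'I_m}}) : is_part r -> is_part s ->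
  refines r (t s) = refines (q r) s.
Proof.
move=> Pr Ps; apply/(refinesP Pr (t_part Ps))/(refinesP (q_part Pr) Ps) => H.
  move=> i i'; rewrite pblock_q //.
  have cl : closed (ee r) (pblock s i).
    apply: (intro_closed (sym_connect_sym (ee_sym Pr))).
    move=> x y /existsP [k /existsP [k' /and3P [kk' /eqP ok /eqP ok']]] xi.
    have := H _ _ kk'; rewrite pblock_t // inE ok ok' => yx.
    exact: part_trans xi yx.
  move/(closed_connect cl); rewrite part_refl //; exact: esym.
move=> k k' kk'; rewrite pblock_t // inE; apply: H; rewrite pblock_q //.
by apply: connect1; apply/existsP; exists k; apply/existsP; exists k'; rewrite kk' !eqxx.
Qed.

Lemma tq_ref (d : {set {set 'I_N}}) : is_part d -> refines (t (zero_part m)) d ->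
  refines (t (q d)) d.
Proof.
move=> Pd t0d; have Hd := t0_ref Pd t0d.
apply/(refinesP (t_part (q_part Pd)) Pd) => k k'.
rewrite pblock_t ?q_part // inE pblock_q //.
set a := [set i | [exists k2, (k2 \in pblock d k) && (o k2 == i)]].
have cl : closed (ee d) a.
  apply: (intro_closed (sym_connect_sym (ee_sym Pd))).
  move=> x y /existsP [k1 /existsP [k2 /and3P [k12 /eqP o1 /eqP o2]]].
  rewrite !inE => /existsP [k3 /andP [k3k /eqP o3]].
  apply/existsP; exists k2; rewrite o2 eqxx andbT.
  apply: part_trans k3k _ => //; apply: part_trans (Hd _ _ _) k12 => //.
  by rewrite o1 o3.
move/(closed_connect cl); rewrite !inE.
have -> : [exists k2, (k2 \in pblock d k) && (o k2 == o k)].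
  by apply/existsP; exists k; rewrite part_refl ?eqxx.
move=> /esym /existsP [k3 /andP [k3k /eqP o3]].
by apply: part_trans k3k (Hd _ _ _).
Qed.

Lemma join_q (r : {set {set 'I_N}}) (p : {set {set 'I_m}}) : is_part r -> is_part p ->
  is_join r (tilde n_ (zero_part m)) (tilde n_ p) = (q r == p).
Proof.
move=> Pr Pp; rewrite /is_join !tildeE.
have Pt0 := t_part zero_part_part.
apply/and4P/eqP => [[_ rp _ /forallP H]|<-].
  rewrite ref_q // in rp.
  have := H (t (q r)); rewrite t_part ?q_part // ref_q ?q_part // refines_refl.
  rewrite (ref_t zero_part_part (q_part Pr)) zero_ref ?q_part // (ref_t Pp (q_part Pr)) => pq.
  exact: refines_antisym (q_part Pr) Pp rp pq.
split; first exact: t_part (q_part Pr).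
- by rewrite ref_q ?q_part // refines_refl.
- by rewrite ref_t ?q_part ?zero_ref ?q_part ?zero_part_part.
apply/forallP => d; apply/implyP => Pd; apply/implyP => rd; apply/implyP => t0d.
apply: refines_trans (tq_ref Pd t0d).
rewrite ref_t ?q_part // -ref_q ?q_part //.
apply: refines_trans rd _; rewrite ref_q ?q_part //; exact: refines_refl.
Qed.

End Lex2.

Lemma map_cst (T S : Type) (c : S) (s : seq T) : [seq c | _ <- s] = nseq (size s) c.
Proof. by elim: s => //= x s ->. Qed.

Unset Implicit Arguments.
Lemma big_enum_ord (R : Type) (idx : R) (op : R -> R -> R) m (F : 'I_m -> R) :
  \big[op/idx]_(i <- enum 'I_m) F i = \big[op/idx]_(i < m) F i.
Proof. by rewrite enumT unlock. Qed.

Section StepA.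
Variables (C : fieldType) (A : algType C) (phi : A -> C) (E : exch_system phi).
Variables (m : nat) (n_ : 'I_m -> nat) (X : forall i : 'I_m, 'I_(n_ i) -> A).
Hypothesis npos : forall i, (0 < n_ i)%N.
Local Notation N := (\sum_(i < m) n_ i).
Local Notation oo := (@o m n_).

Definition LL : seq (nat * A) :=
  flatten [seq [seq (val i, X i j) | j <- enum 'I_(n_ i)] | i <- enum 'I_m].

Lemma LL_fst : map fst LL = owners n_.
Proof.
rewrite /LL /owners map_flatten; congr flatten; rewrite -map_comp; apply: eq_map => i /=.
by rewrite -map_comp /= map_cst size_enum_ord.
Qed.

Lemma LL_snd : map snd LL = flatten [seq [seq X i j | j <- enum 'I_(n_ i)] | i <- enum 'I_m].
Proof.
rewrite /LL map_flatten; congr flatten; rewrite -map_comp; apply: eq_map => i /=.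
by rewrite -map_comp.
Qed.

Lemma size_LL : size LL = N.
Proof. by rewrite -(size_map fst) LL_fst size_owners. Qed.

Lemma preim_inj (B1 B2 : {set 'I_m}) : (oo @^-1: B1 == oo @^-1: B2) = (B1 == B2).
Proof.
apply/eqP/eqP => [H|->] //; apply/setP => i.
have [k ok] := o_surj npos i.
by have /setP /(_ k) := H; rewrite !inE ok.
Qed.

Lemma stepA (s : {set {set 'I_m}}) : is_part s ->
  phi_part E [set oo @^-1: B | B : {set 'I_m} in s] (flatX X)
  = phi_part E s (fun i => \prod_(j < n_ i) X i j).
Proof.
move=> Ps; rewrite /phi_part.
pose code (x : nat) := if insub x is Some i then pickle (pblock s (i : 'I_m)) else 0%N.
pose H (p : nat * A) := exiota E (code p.1) p.2.
rewrite (@phi_kernel _ _ _ E _ _ _ (fun k => code (nth 0%N (owners n_) k))); last first.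
  move=> j j'; rewrite !pblock_t // (inj_eq (pcan_inj pickleK_inv)) preim_inj.
  have EE : forall k : 'I_N, code (nth 0%N (owners n_) k) = pickle (pblock s (oo k)).
    by move=> k; rewrite /code (_ : nth 0%N (owners n_) k = val (oo k)) // valK.
  by rewrite !EE (inj_eq (pcan_inj pickleK_inv)).
have -> : \prod_(k < N) exiota E (code (nth 0%N (owners n_) k)) (flatX X k)
        = \prod_(k < N) H (nth (0%N, 0) LL k).
  apply: eq_bigr => k _; rewrite /H /flatX -LL_fst -LL_snd.
  by rewrite (nth_map (0%N, 0)) ?size_LL // (nth_map (0%N, 0)) ?size_LL.
have -> : \prod_(k < N) H (nth (0%N, 0) LL k) = \prod_(p <- LL) H p.
  by rewrite (big_nth (0%N, 0)) size_LL big_mkord.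
rewrite /LL big_flatten /= big_map big_enum_ord /=; congr exphi.
apply: eq_bigr => i _; rewrite rmorph_prod big_map big_enum_ord /=.
apply: eq_bigr => j _; rewrite /H /code /=.
by rewrite (_ : insub (val i) = Some i) // valK.
Qed.

End StepA.

Unset Implicit Arguments.

Theorem proposition3p4 (R : realType) (A : algType R[i]) (phi : A -> R[i])
  (E : exch_system phi) (m : nat) (n_ : 'I_m -> nat)
  (X : forall i : 'I_m, 'I_(n_ i) -> A) (pi : {set {set 'I_m}}) :
  (forall i, (0 < n_ i)%N) ->
  partition pi [set: 'I_m] ->
  Kpart E pi (fun i => \prod_(j < n_ i) X i j)
  = \sum_(s : {set {set 'I_(\sum_(i < m) n_ i)}} |
            is_part s && is_join s (tilde n_ (zero_part m)) (tilde n_ pi))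
      Kpart E s (flatX X).
Proof.
move=> npos Ppi.
rewrite (eq_bigl (fun s => is_part s && (q s == pi))); last first.
  by move=> s; case Ps: (is_part s) => //=; rewrite join_q.
symmetry.
pose F := fun s : {set {set 'I_m}} => phi_part E s (fun i => \prod_(j < n_ i) X i j).
pose G := fun p : {set {set 'I_m}} =>
  \sum_(s : {set {set 'I_(\sum_(i < m) n_ i)}} | is_part s && (q s == p)) Kpart E s (flatX X).
have HH : forall p, is_part p ->
    \sum_(s : {set {set 'I_m}} | is_part s && refines s p) G s = F p.
  move=> p Pp; rewrite /G.
  rewrite (exchange_big_dep (fun r => is_part r && refines (q r) p)) /=; last first.
    by move=> s r /andP [_ sp] /andP [Pr /eqP qs]; rewrite Pr qs.
  rewrite (eq_bigr (fun r => Kpart E r (flatX X))); last first.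
    move=> r /andP [Pr qp]; rewrite (big_pred1 (q r)) // => s.
    apply/idP/eqP => [/andP [_ /andP [_ /eqP]] //|->].
    by rewrite q_part // qp Pr eqxx.
  rewrite (eq_bigl (fun r => is_part r && refines r [set @o m n_ @^-1: B | B : {set 'I_m} in p])).
    by rewrite (L1 (fun s => phi_part E s (flatX X))) ?t_part // stepA.
  by move=> r; case Pr: (is_part r) => //=; rewrite ref_q.
exact: (L2 HH Ppi).
Qed.
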